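(* Let $K$ be a non-Archimedean locally compact field of characteristic $p>0$ with group of 1-units $U=1+M_K$. Let $f:U\to U$ be a locally analytic group endomorphism, and suppose there exist $y\in\mathbb{Z}_p$ and an open neighborhood $V$ of $1$ in $U$ such that $f(u)=u^y$ for all $u\in V$. Then $f(u)=u^y$ for all $u\in U$.
   Context: $M_K$ is the maximal ideal of the ring of integers $R_K$ of $K$; with constant field $\mathbb{F}$ of order $q$ and uniformizer $\pi$, $K=\mathbb{F}((\pi))$, $U=1+\pi\mathbb{F}[[\pi]]$, and $|x|=q^{-v(x)}$. A continuous function $f$ on a ball $B_{\alpha,t}=\{u\in R_K:|u-\alpha|\le t\}$, $t=|\rho|$, is analytic there if $f(u)=\sum_{n\ge0}c_n\left(\frac{u-\alpha}{\rho}\right)^n$ with $c_n\in K$, $c_n\to0$; $f:U\to K$ is locally analytic if each $\alpha\in U$ has a ball $B_{\alpha,t_\alpha}\subset U$, $t_\alpha>0$, on which $f$ is analytic. For $y\in\mathbb{Z}_p$ and $u=1+x\in U$, $u^y=\sum_{n\ge0}\binom{y}{n}x^n$. *)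

(* Defs.v *)
(* The local field K of characteristic p is modelled as
   F((pi)) for a finite field F (every non-Archimedean locally compact field of
   characteristic p > 0 is of this form).  *)
From mathcomp Require Import all_boot all_order all_algebra.
Set Implicit Arguments. Unset Strict Implicit. Unset Printing Implicit Defensive.
Import Order.TTheory GRing.Theory Num.Theory.
Local Open Scope ring_scope.

Section LocalField.
Variable F : finFieldType.

Definition ps := nat -> F.
Definition ps_one : ps := fun n => if n is 0%N then 1 else 0.
Definition ps_add (a b : ps) : ps := fun n => a n + b n.
Definition ps_opp (a : ps) : ps := fun n => - a n.
Definition ps_mul (a b : ps) : ps :=
  fun n => \sum_(i < n.+1) a i * b (n - i)%N.
Fixpoint ps_exp (a : ps) (n : nat) : ps :=
  if n is n'.+1 then ps_mul a (ps_exp a n') else ps_one.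
Definition ps_shift (e : nat) (a : ps) : ps :=
  fun n => if (e <= n)%N then a (n - e)%N else 0.

(* ---------- K = F((pi)) : an element is pi^(-lden) * lnum ---------- *)
Record lau := Lau { lden : nat; lnum : ps }.
Definition lcoef (x : lau) (m : int) : F :=
  match (m + (lden x)%:Z)%R with Posz k => lnum x k | Negz _ => 0 end.
Definition lau_of_ps (a : ps) : lau := Lau 0 a.
Definition lau_zero : lau := Lau 0 (fun _ => 0).
Definition lau_one : lau := Lau 0 ps_one.
Definition lau_add (x y : lau) : lau :=
  Lau (lden x + lden y) (ps_add (ps_shift (lden y) (lnum x)) (ps_shift (lden x) (lnum y))).
Definition lau_opp (x : lau) : lau := Lau (lden x) (ps_opp (lnum x)).
Definition lau_sub (x y : lau) : lau := lau_add x (lau_opp y).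
Definition lau_mul (x y : lau) : lau := Lau (lden x + lden y) (ps_mul (lnum x) (lnum y)).
Fixpoint lau_exp (x : lau) (n : nat) : lau :=
  if n is n'.+1 then lau_mul x (lau_exp x n') else lau_one.

(* equality in K (the representation above is not canonical) *)
Definition lau_eq (x y : lau) : Prop := forall m : int, lcoef x m = lcoef y m.
(* v(x) >= M, i.e. |x| <= q^(-M) *)
Definition vge (x : lau) (M : int) : Prop := forall m : int, m < M -> lcoef x m = 0.
Definition abs_le (x y : lau) : Prop := forall M : int, vge y M -> vge x M.
Definition lau_nonzero (x : lau) : Prop := exists m : int, lcoef x m != 0.

Definition tends_to_zero (c : nat -> lau) : Prop :=
  forall M : int, exists N : nat, forall n, (N <= n)%N -> vge (c n) M.
Fixpoint psum (c : nat -> lau) (w : lau) (N : nat) : lau :=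
  if N is N'.+1 then lau_add (psum c w N') (lau_mul (c N') (lau_exp w N'))
  else lau_zero.
Definition series_to (c : nat -> lau) (w : lau) (l : lau) : Prop :=
  forall M : int, exists N0 : nat, forall N, (N0 <= N)%N ->
    vge (lau_sub l (psum c w N)) M.

Record U1 := mkU1 { uval :> ps; uvalP : uval 0%N = 1 }.

Lemma ps_mul0 (a b : ps) : ps_mul a b 0%N = a 0%N * b 0%N.
Proof. by rewrite /ps_mul big_ord1. Qed.

Lemma U1_mulP (u v : U1) : ps_mul u v 0%N = 1.
Proof. by rewrite ps_mul0 !uvalP mulr1. Qed.
Definition U1_mul (u v : U1) : U1 := @mkU1 (ps_mul u v) (U1_mulP u v).

Definition U1_open (V : U1 -> Prop) : Prop :=
  forall u : U1, V u -> exists k : nat,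
    forall w : U1, (forall i, (i < k)%N -> uval w i = uval u i) -> V w.
Definition U1_one : U1 := @mkU1 ps_one erefl.

(* ---------- Z_p as the inverse limit of Z/p^k ---------- *)
Record zp (p : nat) := Zp {
  zres : nat -> nat;
  zres_lt : forall k, (zres k < p ^ k)%N;
  zres_compat : forall k, (zres k.+1 %% p ^ k = zres k)%N }.

(* image in F of binom(y, n) in Z_p: binom(y,n) = binom(y mod p^(n+1), n)
   mod p (Lucas), and p = char F. *)
Definition zbinomF (p : nat) (y : zp p) (n : nat) : F :=
  ('C(zres y n.+1, n))%:R.

(* u^y = sum_n binom(y,n) x^n, u = 1 + x; the coefficient of pi^m only
   involves n <= m since v(x^n) >= n. *)
Definition upow (p : nat) (u : U1) (y : zp p) : ps :=
  let x : ps := fun i => if i is 0%N then 0 else uval u i in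
  fun m => \sum_(n < m.+1) zbinomF y n * ps_exp x n m.

Definition analytic_on (f : U1 -> U1) (alpha : U1) (rho : lau) : Prop :=
  exists c : nat -> lau, tends_to_zero c /\
    forall u : U1, abs_le (lau_sub (lau_of_ps u) (lau_of_ps alpha)) rho ->
      forall w : lau, lau_eq (lau_mul rho w) (lau_sub (lau_of_ps u) (lau_of_ps alpha)) ->
        series_to c w (lau_of_ps (f u)).

Definition locally_analytic (f : U1 -> U1) : Prop :=
  forall alpha : U1, exists rho : lau, lau_nonzero rho /\
    (forall u : ps, abs_le (lau_sub (lau_of_ps u) (lau_of_ps alpha)) rho -> u 0%N = 1) /\
    analytic_on f alpha rho.

End LocalField.

(* Main.v *)
Require Import Defs.
From mathcomp Require Import all_boot all_order all_algebra.
From Stdlib Require Import FunctionalExtensionality.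
Import GRing.Theory.
Set Implicit Arguments. Unset Strict Implicit.
Local Open Scope ring_scope.

Section S.
Variable R : comNzRingType.
Variable p : nat.
Hypothesis hp : p \in [pchar R].

Lemma frobN_add k (x y : R) : (x + y) ^+ (p ^ k) = x ^+ (p ^ k) + y ^+ (p ^ k).
Proof.
apply: exprDn_pchar; rewrite pnatX pnatE ?hp //; exact: pcharf_prime hp.
Qed.

Lemma frobN_sum k (I : Type) (r : seq I) (P : pred I) (G : I -> R) :
  (\sum_(i <- r | P i) G i) ^+ (p ^ k) = \sum_(i <- r | P i) G i ^+ (p ^ k).
Proof.
have p0 : (0 < p ^ k)%N by rewrite expn_gt0 prime_gt0 // (pcharf_prime hp).
apply: (big_morph (fun x => x ^+ (p ^ k))) => //.
- by move=> x y; apply: frobN_add.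
- by rewrite expr0n; case: (p ^ k)%N p0.
Qed.
End S.

Section T.
Variable F : fieldType.
Variable p : nat.
Hypothesis hp : p \in [pchar F].

Lemma frob_poly k (P : {poly F}) : P ^+ (p ^ k) =
   (\poly_(i < size P) (P`_i ^+ (p ^ k))) \Po 'X^(p ^ k).
Proof.
have hpP : p \in [pchar {poly F}] by rewrite pchar_poly.
rewrite -{1}[P]coefK !poly_def (@frobN_sum _ _ hpP).
rewrite linear_sum /=; apply: eq_bigr => i _.
by rewrite exprZn comp_polyZ comp_Xn_poly -!exprM mulnC.
Qed.

Lemma coef_frob k (P : {poly F}) j : (P ^+ (p ^ k))`_j =
  if (p ^ k %| j)%N then P`_(j %/ p ^ k) ^+ (p ^ k) else 0.
Proof.
have p0 : (0 < p ^ k)%N by rewrite expn_gt0 prime_gt0 // (pcharf_prime hp).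
rewrite frob_poly coef_comp_poly_Xn //; case: ifP => // _.
rewrite coef_poly; case: ltnP => // h.
by rewrite nth_default // expr0n; case: (p ^ k)%N p0.
Qed.

Lemma frobN_inj k (x y : F) : x ^+ (p ^ k) = y ^+ (p ^ k) -> x = y.
Proof.
move=> h; apply/eqP; rewrite -subr_eq0.
have p0 : (0 < p ^ k)%N by rewrite expn_gt0 prime_gt0 // (pcharf_prime hp).
suff: (x - y) ^+ (p ^ k) == 0 by rewrite expf_eq0 p0.
apply/eqP.
have := @frobN_add _ _ hp k (x - y) y.
by rewrite subrK h -{1}[y ^+ _]add0r => /addIr <-.
Qed.
End T.

Section P.
Variable F : finFieldType.

Lemma ps_exp_poly (a : ps F) n L j : (j < L)%N ->
  ps_exp a n j = ((\poly_(i < L) a i) ^+ n)`_j.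
Proof.
elim: n j => [|n IH] j hj /=.
  by rewrite expr0 coefC /ps_one; case: j {hj} => [|j].
rewrite exprS coefM /ps_mul.
apply: eq_bigr => i _.
have hi : (i < L)%N by rewrite (leq_ltn_trans _ hj) // -ltnS.
rewrite coef_poly hi IH //.
exact: leq_ltn_trans (leq_subr _ _) hj.
Qed.

Lemma trunc_pow (P Q : {poly F}) L : (forall i, (i < L)%N -> P`_i = Q`_i) ->
  forall n j, (j < L)%N -> (P ^+ n)`_j = (Q ^+ n)`_j.
Proof.
move=> hPQ; elim=> [|n IH] j hj; first by rewrite !expr0.
rewrite !exprS !coefM; apply: eq_bigr => i _.
have hi : (i < L)%N by rewrite (leq_ltn_trans _ hj) // -ltnS.
rewrite hPQ // IH //.
exact: leq_ltn_trans (leq_subr _ _) hj.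
Qed.

Lemma ps_exp_low (x : ps F) : x 0%N = 0 -> forall n j, (j < n)%N -> ps_exp x n j = 0.
Proof.
move=> x0; elim=> [|n IH] j // hj /=.
rewrite /ps_mul big1 // => -[[|i] hi] _ /=; first by rewrite x0 mul0r.
rewrite IH ?mulr0 //.
rewrite ltnS in hj; rewrite ltn_subLR; last by rewrite ltnS in hi.
exact: leq_trans hj (leq_addl _ _).
Qed.

Fixpoint U1pow (u : U1 F) (n : nat) : U1 F :=
  if n is n'.+1 then U1_mul u (U1pow u n') else u.

Lemma U1powE (u : U1 F) n j : uval (U1pow u n) j = ps_exp u n.+1 j.
Proof.
elim: n j => [|n IH] j /=.
  rewrite /ps_mul big_ord_recr /= subnn mulr1 big1 ?add0r // => [[i hi]] _ /=.
  by rewrite /ps_one; case: (j - i)%N (subn_gt0 i j) => [|?]; rewrite ?mulr0 // hi.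
by rewrite /ps_mul; apply: eq_bigr => i _; rewrite IH.
Qed.

Definition xof (u : U1 F) : ps F := fun i => if i is 0%N then 0 else uval u i.

Lemma upowE p (u : U1 F) (y : zp p) m :
  upow u y m = \sum_(n < m.+1) zbinomF F y n * ps_exp (xof u) n m.
Proof. by []. Qed.

End P.

Lemma natr_frob (F : fieldType) p (hp : p \in [pchar F]) k a :
  (a%:R : F) ^+ (p ^ k) = a%:R.
Proof.
have p0 : (0 < p ^ k)%N by rewrite expn_gt0 prime_gt0 // (pcharf_prime hp).
elim: a => [|a IH]; first by rewrite expr0n; case: (p ^ k)%N p0.
by rewrite -addn1 natrD (@frobN_add _ _ hp) IH expr1n.
Qed.

Theorem lemma2p5 (F : finFieldType) (p : nat) (hp : p \in [pchar F]%R)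
  (f : U1 F -> U1 F)
  (fhom : forall u v : U1 F, f (U1_mul u v) = U1_mul (f u) (f v))
  (fan : locally_analytic f)
  (y : zp p) (V : U1 F -> Prop)
  (Vopen : U1_open V) (V1 : V (U1_one F))
  (hV : forall u : U1 F, V u -> uval (f u) = upow u y) :
  forall u : U1 F, uval (f u) = upow u y.
Proof.
move=> u; apply: functional_extensionality => m.
have pr := pcharf_prime hp; have p1 := prime_gt1 pr.
have [k0 Hk0] := Vopen _ V1.
set k := (k0 + m)%N.
set N := (p ^ k)%N.
have kN : (k < N)%N by exact: ltn_expl.
have N0 : (0 < N)%N by rewrite expn_gt0 prime_gt0.
set L := (N * m.+1)%N.
have NL : (N <= L)%N by rewrite leq_pmulr.
have mL : (m < L)%N.
  by apply: leq_trans NL; apply: leq_ltn_trans kN; rewrite leq_addl.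
have NmL : (N * m < L)%N by rewrite ltn_pmul2l.
have fpow : forall n, f (U1pow u n) = U1pow (f u) n.
  by elim=> [|n IH] //=; rewrite fhom IH.
set w := U1pow u N.-1.
set Tu := \poly_(i < L) uval u i.
have wE : forall j, (j < L)%N -> uval w j = (Tu ^+ N)`_j.
  by move=> j hj; rewrite U1powE prednK // (ps_exp_poly _ _ hj).
have Vw : V w.
  apply: Hk0 => i hi.
  have iN : (i < N)%N by rewrite (leq_trans hi) // (leq_trans (leq_addr m k0)) // ltnW.
  rewrite wE; last exact: leq_trans iN NL.
  rewrite (coef_frob hp) /=; case: i hi iN => [|i] hi iN.
    by rewrite dvdn0 div0n coef_poly (leq_trans N0 NL) uvalP expr1n.
  by case: ifP => // /(dvdn_leq (ltn0Sn _)); rewrite leqNgt iN.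
have Hf : uval (f w) (N * m)%N = (uval (f u) m) ^+ N.
  rewrite fpow U1powE prednK // (ps_exp_poly _ _ NmL) (coef_frob hp).
  by rewrite dvdn_mulr // mulKn // coef_poly mL.
apply: (frobN_inj hp (k:=k)); rewrite -/N -Hf hV //.
set Xu := \poly_(i < L) xof u i.
have hXw : forall i, (i < L)%N -> (\poly_(i < L) xof w i)`_i = (Xu ^+ N)`_i.
  move=> i hi; rewrite coef_poly hi (coef_frob hp) -/N.
  case: i hi => [|i] hi /=.
    by rewrite dvdn0 div0n coef_poly (leq_trans N0 NL) /= expr0n; case: (N) N0.
  rewrite wE // (coef_frob hp) -/N; case: ifP => // hd.
  have hq : (0 < i.+1 %/ N)%N by rewrite divn_gt0 // dvdn_leq.
  have hqL : (i.+1 %/ N < L)%N by apply: leq_ltn_trans hi; apply: leq_div.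
  by rewrite !coef_poly hqL; case: (i.+1 %/ N)%N hq.
have hE : forall n, ps_exp (xof w) n (N * m)%N = (ps_exp (xof u) n m) ^+ N.
  move=> n; rewrite (ps_exp_poly _ _ NmL) (trunc_pow hXw) // -exprM mulnC exprM.
  by rewrite (coef_frob hp) dvdn_mulr // mulKn // -(ps_exp_poly _ _ mL).
rewrite !upowE (@frobN_sum _ _ hp).
under eq_bigr do rewrite hE.
under [RHS]eq_bigr do rewrite exprMn /zbinomF (natr_frob hp) -/(zbinomF F y _).
rewrite [RHS](big_ord_widen (N * m).+1 (fun n => zbinomF F y n * ps_exp (xof u) n m ^+ N)).
  rewrite [RHS]big_mkcond /=; apply: eq_bigr => n _.
  case: ifP => // hn.
  rewrite ps_exp_low; last by rewrite ltnNge -ltnS hn.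
  by rewrite expr0n eqn0Ngt N0 mulr0.
  by [].
by rewrite ltnS leq_pmull.
Qed.
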